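(* Let $n<\omega$, let $L\in\mathbf{M}_n$ and let $P$ be its dual $pm$-space. Then every order component of $P$ is a closed subset of $P$.
   Context: $\mathbf{M}_n$ is the variety of regular pseudocomplemented de Morgan algebras of range $n$: algebras $(L;\wedge,\vee,{}^\ast,{}^\prime,0,1)$ with bounded distributive lattice reduct, pseudocomplement ${}^\ast$, de Morgan involution ${}^\prime$, satisfying $x\wedge x^{\prime\ast\prime}\le y\vee y^\ast$ (regularity) and $(x\wedge x^{\prime\ast})^{n(\prime\ast)}=(x\wedge x^{\prime\ast})^{(n+1)(\prime\ast)}$, where $x^{0(\prime\ast)}=x$, $x^{(k+1)(\prime\ast)}=((x^{k(\prime\ast)})')^\ast$. The dual $pm$-space is the Priestley space $(P;\tau,\le)$ of prime ideals with the involution $\zeta(I)=\{a:a'\notin I\}$. An order component of $P$ is a maximal subset any two elements of which are joined by a finite path in the comparability graph of $(P;\le)$. *)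

(* Defs.v *)
From Stdlib Require Import List Relations.
Import ListNotations.

Record pmAlg := PmAlg {
  car :> Type;
  mt : car -> car -> car;
  jn : car -> car -> car;
  st : car -> car;
  dm : car -> car;
  zero : car;
  one : car;
  mtA : forall x y z, mt x (mt y z) = mt (mt x y) z;
  jnA : forall x y z, jn x (jn y z) = jn (jn x y) z;
  mtC : forall x y, mt x y = mt y x;
  jnC : forall x y, jn x y = jn y x;
  mtJ : forall x y, mt x (jn x y) = x;
  jnM : forall x y, jn x (mt x y) = x;
  mtDr : forall x y z, mt x (jn y z) = jn (mt x y) (mt x z);
  jn0 : forall x, jn x zero = x;
  mt1 : forall x, mt x one = x;
  stP : forall a x, mt a x = zero <-> mt x (st a) = x;
  dmK : forall x, dm (dm x) = x;
  dmM : forall x y, dm (mt x y) = jn (dm x) (dm y)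
}.

Definition le (A : pmAlg) (x y : A) : Prop := mt A x y = x.

Definition iter_dmst (A : pmAlg) (k : nat) (x : A) : A :=
  Nat.iter k (fun z => st A (dm A z)) x.

Definition in_Mn (n : nat) (A : pmAlg) : Prop :=
  (forall x y : A,
     le A (mt A x (dm A (st A (dm A x)))) (jn A y (st A y)))
  /\
  (forall x : A,
     iter_dmst A n (mt A x (st A (dm A x)))
     = iter_dmst A (S n) (mt A x (st A (dm A x)))).

Definition prime_ideal (A : pmAlg) (I : A -> Prop) : Prop :=
  I (zero A)
  /\ (forall a b : A, I b -> le A a b -> I a)
  /\ (forall a b : A, I a -> I b -> I (jn A a b))
  /\ ~ I (one A)
  /\ (forall a b : A, I (mt A a b) -> I a \/ I b).

Definition Point (A : pmAlg) := { I : A -> Prop | prime_ideal A I }.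

Definition pt_le (A : pmAlg) (p q : Point A) : Prop :=
  forall a, proj1_sig p a -> proj1_sig q a.

Definition Xa (A : pmAlg) (a : A) (p : Point A) : Prop := ~ proj1_sig p a.

(* subbasic sets of the Priestley topology: X_a (true) and P \ X_a (false) *)
Definition subbasic (A : pmAlg) (ab : A * bool) (p : Point A) : Prop :=
  if snd ab then Xa A (fst ab) p else ~ Xa A (fst ab) p.

Definition is_open (A : pmAlg) (U : Point A -> Prop) : Prop :=
  forall p, U p ->
    exists l : list (A * bool),
      Forall (fun ab => subbasic A ab p) l
      /\ (forall q, Forall (fun ab => subbasic A ab q) l -> U q).

Definition is_closed (A : pmAlg) (C : Point A -> Prop) : Prop :=
  is_open A (fun p => ~ C p).

Definition comparable (A : pmAlg) (p q : Point A) : Prop :=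
  pt_le A p q \/ pt_le A q p.

Definition path_connected (A : pmAlg) : Point A -> Point A -> Prop :=
  clos_refl_trans (Point A) (comparable A).

Definition order_component (A : pmAlg) (C : Point A -> Prop) : Prop :=
  (forall p q, C p -> C q -> path_connected A p q)
  /\ (forall D : Point A -> Prop,
        (forall p, C p -> D p) ->
        (forall p q, D p -> D q -> path_connected A p q) ->
        forall p, D p -> C p).

(* Main.v *)
Require Import Defs.
From Stdlib Require Import List Relations Classical ClassicalEpsilon FunctionalExtensionality PropExtensionality Lia Arith Wf_nat.


Lemma mt_idem (L : pmAlg) (x : L) : mt L x x = x.
Proof. transitivity (mt L x (jn L x (mt L x x))). rewrite jnM; reflexivity. apply mtJ. Qed.
Lemma jn_idem (L : pmAlg) (x : L) : jn L x x = x.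
Proof. transitivity (jn L x (mt L x (jn L x x))). rewrite mtJ; reflexivity. apply jnM. Qed.
Lemma le_jn (L : pmAlg) (x y : L) : le L x y <-> jn L x y = y.
Proof. unfold le; split; intro H.
- rewrite <- H, jnC, mtC. apply jnM.
- rewrite <- H. apply mtJ. Qed.
Lemma le_refl (L : pmAlg) (x : L) : le L x x. Proof. apply mt_idem. Qed.
Lemma le_trans (L : pmAlg) (x y z : L) : le L x y -> le L y z -> le L x z.
Proof. unfold le; intros H1 H2. rewrite <- H1, <- mtA, H2. reflexivity. Qed.
Lemma le_antisym (L : pmAlg) (x y : L) : le L x y -> le L y x -> x = y.
Proof. unfold le; intros H1 H2. rewrite <- H1. rewrite mtC. exact H2. Qed.
Lemma le_mt_l (L : pmAlg) (x y : L) : le L (mt L x y) x.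
Proof. unfold le. rewrite (mtC L (mt L x y) x), mtA, mt_idem. reflexivity. Qed.
Lemma le_mt_r (L : pmAlg) (x y : L) : le L (mt L x y) y.
Proof. unfold le. rewrite <- mtA, mt_idem. reflexivity. Qed.
Lemma mt_glb (L : pmAlg) (x y z : L) : le L z x -> le L z y -> le L z (mt L x y).
Proof. unfold le; intros H1 H2. rewrite mtA, H1, H2. reflexivity. Qed.
Lemma le_jn_l (L : pmAlg) (x y : L) : le L x (jn L x y).
Proof. apply mtJ. Qed.
Lemma le_jn_r (L : pmAlg) (x y : L) : le L y (jn L x y).
Proof. rewrite jnC. apply mtJ. Qed.
Lemma jn_lub (L : pmAlg) (x y z : L) : le L x z -> le L y z -> le L (jn L x y) z.
Proof. rewrite !le_jn; intros H1 H2. rewrite <- jnA, H2, H1. reflexivity. Qed.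
Lemma mt_mono (L : pmAlg) (a b c d : L) : le L a b -> le L c d -> le L (mt L a c) (mt L b d).
Proof. intros. apply mt_glb. eapply le_trans. apply le_mt_l. auto. eapply le_trans. apply le_mt_r. auto. Qed.
Lemma jn_mono (L : pmAlg) (a b c d : L) : le L a b -> le L c d -> le L (jn L a c) (jn L b d).
Proof. intros. apply jn_lub. eapply le_trans. eauto. apply le_jn_l. eapply le_trans. eauto. apply le_jn_r. Qed.
Lemma mt0 (L : pmAlg) (x : L) : mt L x (zero L) = zero L.
Proof. rewrite mtC. transitivity (mt L (zero L) (jn L (zero L) x)). rewrite jnC, jn0. reflexivity. apply mtJ. Qed.
Lemma le0 (L : pmAlg) (x : L) : le L (zero L) x.
Proof. unfold le. rewrite mtC. apply mt0. Qed.
Lemma le_zero (L : pmAlg) (x : L) : le L x (zero L) -> x = zero L.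
Proof. unfold le. rewrite mt0. auto. Qed.
Lemma le1 (L : pmAlg) (x : L) : le L x (one L).
Proof. apply mt1. Qed.
Lemma le_one (L : pmAlg) (x : L) : le L (one L) x -> x = one L.
Proof. unfold le. rewrite mtC, mt1. auto. Qed.
Lemma dm_anti (L : pmAlg) (x y : L) : le L x y -> le L (dm L y) (dm L x).
Proof. intro H. apply le_jn. unfold le in H. rewrite jnC, <- dmM, H. reflexivity. Qed.
Lemma dmJ (L : pmAlg) (x y : L) : dm L (jn L x y) = mt L (dm L x) (dm L y).
Proof. rewrite <- (dmK L (mt L (dm L x) (dm L y))), dmM, !dmK. reflexivity. Qed.
Lemma dm0 (L : pmAlg) : dm L (zero L) = one L.
Proof. apply le_one. rewrite <- (dmK L (one L)). apply dm_anti, le0. Qed.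
Lemma dm1 (L : pmAlg) : dm L (one L) = zero L.
Proof. rewrite <- dm0, dmK. reflexivity. Qed.
Lemma mt_st (L : pmAlg) (a : L) : mt L a (st L a) = zero L.
Proof. apply stP. apply mt_idem. Qed.
Lemma le_st (L : pmAlg) (a x : L) : mt L a x = zero L -> le L x (st L a).
Proof. apply stP. Qed.
Lemma st_anti (L : pmAlg) (a b : L) : le L a b -> le L (st L b) (st L a).
Proof. intro H. apply le_st. apply le_zero. rewrite <- (mt_st L b). apply mt_mono; auto. apply le_refl. Qed.

Definition chi (L : pmAlg) (a : L) : L := st L (dm L a).
Lemma chi_mono (L : pmAlg) (a b : L) : le L a b -> le L (chi L a) (chi L b).
Proof. intro. unfold chi. apply st_anti, dm_anti. auto. Qed.
Lemma chik_mono (L : pmAlg) k (a b : L) : le L a b -> le L (Nat.iter k (chi L) a) (Nat.iter k (chi L) b).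
Proof. induction k; simpl; auto. intro. apply chi_mono; auto. Qed.
Lemma iter_swap {A} (f : A -> A) k x : Nat.iter (S k) f x = Nat.iter k f (f x).
Proof. induction k; simpl; auto. simpl in IHk. rewrite IHk. reflexivity. Qed.
Lemma jn_one_dm (L : pmAlg) (j c : L) : jn L j c = one L -> le L (dm L c) (chi L j).
Proof. intro H. apply le_st. rewrite <- dmJ, H, dm1. reflexivity. Qed.
Lemma jn_chi (L : pmAlg) (j : L) : jn L j (dm L (chi L j)) = one L.
Proof. rewrite <- (dmK L (jn L _ _)), dmJ, dmK. unfold chi. rewrite mt_st, dm0. reflexivity. Qed.
Lemma key_dist (L : pmAlg) (m1 m2 a b : L) :
  le L (mt L (jn L m1 a) (jn L m2 b)) (jn L (jn L m1 m2) (mt L a b)).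
Proof.
  rewrite mtDr. apply jn_lub.
  - eapply le_trans. apply le_mt_r. eapply le_trans; [|apply le_jn_l]. apply le_jn_r.
  - rewrite mtC, mtDr. apply jn_lub.
    + eapply le_trans. apply le_mt_r. eapply le_trans; [|apply le_jn_l]. apply le_jn_l.
    + rewrite mtC. apply le_jn_r.
Qed.


Definition subs {A} (X Y : A -> Prop) := forall a, X a -> Y a.
Definition Un {A} (S : (A -> Prop) -> Prop) : A -> Prop := fun a => exists X, S X /\ X a.
Definition chainP {A} (S : (A -> Prop) -> Prop) := forall X Y, S X -> S Y -> subs X Y \/ subs Y X.

Lemma set_ext {A} (X Y : A -> Prop) : subs X Y -> subs Y X -> X = Y.
Proof. intros. apply functional_extensionality; intro a. apply propositional_extensionality; split; auto. Qed.

Inductive tower {A} (f : (A -> Prop) -> (A -> Prop)) (X0 : A -> Prop) : (A -> Prop) -> Prop :=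
| tw0 : tower f X0 X0
| twf : forall X, tower f X0 X -> tower f X0 (f X)
| twU : forall S, (forall X, S X -> tower f X0 X) -> chainP S -> (exists X, S X) -> tower f X0 (Un S).

Lemma tower_facts {A} (f : (A -> Prop) -> (A -> Prop)) X0 (finc : forall X, subs X (f X)) :
  (forall X Y, tower f X0 X -> tower f X0 Y -> subs X Y \/ subs Y X).
Proof.
  assert (h0 : forall X, tower f X0 X -> subs X0 X).
  { intros X h; induction h. - intros a; auto. - intros a ha. apply finc; auto.
    - destruct H2 as [Y hY]. intros a ha. exists Y; split; auto. apply H0; auto. }
  set (E := fun c => forall x, tower f X0 x -> subs x c -> ~ subs c x -> subs (f x) c).
  assert (L1 : forall c, tower f X0 c -> E c -> forall x, tower f X0 x -> subs x c \/ subs (f c) x).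
  { intros c hc hE x hx. induction hx.
    - left. apply h0; auto.
    - destruct IHhx as [h|h].
      + destruct (classic (subs c X)) as [h'|h'].
        * right. rewrite (set_ext X c h h'). intros a; auto.
        * left. apply hE; auto.
      + right. intros a ha. apply finc. apply h; auto.
    - destruct (classic (forall X, S X -> subs X c)) as [h|h].
      + left. intros a [X [hX ha]]. apply (h X hX); auto.
      + right. apply not_all_ex_not in h. destruct h as [X h].
        apply imply_to_and in h. destruct h as [hX h].
        destruct (H0 X hX) as [h'|h']; [contradiction|].
        intros a ha. exists X; split; auto. }
  assert (L2 : forall c, tower f X0 c -> E c).
  { intros c hc; induction hc.
    - intros x hx h1 h2. exfalso. apply h2. apply h0; auto.
    - intros x hx h1 h2. destruct (L1 X hc IHhc x hx) as [h|h]; [|contradiction].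
      destruct (classic (subs X x)) as [h'|h'].
      + rewrite (set_ext x X h h'). intros a; auto.
      + intros a ha. apply finc. apply (IHhc x hx h h'); auto.
    - intros x hx h1 h2.
      destruct (classic (exists a, Un S a /\ ~ x a)) as [[a [[X [hX ha]] hna]]|hn].
      + destruct (L1 X (H X hX) (H0 X hX) x hx) as [h|h].
        * assert (~ subs X x) by (intro hh; apply hna, hh, ha).
          intros b hb. exists X; split; auto. apply (H0 X hX x hx h H3); auto.
        * exfalso. apply hna. apply h, finc, ha.
      + exfalso. apply h2. intros a ha. apply NNPP; intro hxa. apply hn; eauto. }
  intros X Y hX hY. destruct (L1 Y hY (L2 Y hY) X hX) as [h|h]; auto.
  right. intros a ha. apply h, finc, ha.
Qed.

Lemma zorn {A} (P : (A -> Prop) -> Prop) (X0 : A -> Prop) :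
  P X0 ->
  (forall S, (forall X, S X -> P X) -> chainP S -> (exists X, S X) -> P (Un S)) ->
  exists M, P M /\ forall N, P N -> subs M N -> subs N M.
Proof.
  intros HP0 Hch.
  set (spec := fun X Y => subs X Y /\ (P X -> (P Y /\ (subs Y X -> forall N, P N -> subs X N -> subs N X)))).
  assert (ex_spec : forall X, exists Y, spec X Y).
  { intro X. destruct (classic (exists N, P N /\ subs X N /\ ~ subs N X)) as [[N [h1 [h2 h3]]]|hn].
    - exists N. split; auto. intros _. split; auto. intro; contradiction.
    - exists X. split. intros a h; auto. intro hX. split; auto. intros _ N hN hXN.
      destruct (classic (subs N X)); auto. exfalso; apply hn; eauto. }
  set (f := fun X => epsilon (inhabits X) (spec X)).
  assert (fs : forall X, spec X (f X)). { intro X. apply epsilon_spec. apply ex_spec. }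
  assert (finc : forall X, subs X (f X)). { intros X. apply (fs X). }
  assert (tP : forall X, tower f X0 X -> P X).
  { intros X h; induction h; auto. apply (fs X); auto. }
  pose proof (tower_facts f X0 finc) as Hc.
  assert (hU : tower f X0 (Un (tower f X0))).
  { apply twU. auto. unfold chainP; intros X Y; apply Hc. exists X0; constructor. }
  exists (Un (tower f X0)). split; auto.
  destruct (proj2 (fs _) (tP _ hU)) as [_ hm]. apply hm. intros a ha. exists (f (Un (tower f X0))). split; auto. apply twf; auto.
Qed.


Definition ideal (L : pmAlg) (I : L -> Prop) := I (zero L) /\ (forall x y, I y -> le L x y -> I x) /\ (forall x y, I x -> I y -> I (jn L x y)).
Definition filt (L : pmAlg) (F : L -> Prop) := F (one L) /\ (forall x y, F x -> le L x y -> F y) /\ (forall x y, F x -> F y -> F (mt L x y)).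

Lemma PIT (L : pmAlg) (I F : L -> Prop) : ideal L I -> filt L F -> (forall x, I x -> F x -> False) ->
  exists J : Point L, subs I (proj1_sig J) /\ forall x, proj1_sig J x -> F x -> False.
Proof.
  intros [I0 [Id Ij]] [F1 [Fu Fm]] Hd.
  set (P := fun X : L -> Prop => ideal L X /\ subs I X /\ forall x, X x -> F x -> False).
  assert (HP0 : P I). { split. split; auto. split; [intros a; auto|auto]. }
  assert (Hch : forall S, (forall X, S X -> P X) -> chainP S -> (exists X, S X) -> P (Un S)).
  { intros S HS0 Sc [X hX].
    assert (HS : forall Y, S Y -> Y (zero L) /\ (forall x y, Y y -> le L x y -> Y x) /\ (forall x y, Y x -> Y y -> Y (jn L x y))
       /\ subs I Y /\ forall x, Y x -> F x -> False).
    { intros Y hY. destruct (HS0 Y hY) as [[a [b c]] [d e]]. auto. }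
    split; [split; [|split]|split].
    + exists X. split; auto. apply (proj1 (HS X hX)).
    + intros x y [Y [hY hy]] h. exists Y; split; auto. apply (proj1 (proj2 (HS Y hY))) with y; auto.
    + intros x y [X1 [h1 hx]] [X2 [h2 hy]]. destruct (Sc X1 X2 h1 h2) as [s|s].
      * exists X2; split; auto. apply (proj1 (proj2 (proj2 (HS X2 h2)))); auto.
      * exists X1; split; auto. apply (proj1 (proj2 (proj2 (HS X1 h1)))); auto.
    + intros a ha. exists X; split; auto. apply (proj1 (proj2 (proj2 (proj2 (HS X hX))))); auto.
    + intros x [Y [hY hy]] hF. apply (proj2 (proj2 (proj2 (proj2 (HS Y hY))))) with x; auto. }
  destruct (zorn P I HP0 Hch) as [M [[[M0 [Md Mj]] [MI MF]] Mmax]].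
  { assert (ext : forall a, ~ M a -> exists m f, M m /\ F f /\ le L f (jn L m a)).
    { intros a hna. set (N := fun x => exists m, M m /\ le L x (jn L m a)).
      assert (hN : ideal L N /\ subs I N).
      { split. split; [|split].
        - exists (zero L). split; auto. apply le0.
        - intros x y [m [hm hl]] h. exists m; split; auto. eapply le_trans; eauto.
        - intros x y [m1 [h1 l1]] [m2 [h2 l2]]. exists (jn L m1 m2). split; auto.
          apply jn_lub. eapply le_trans; [apply l1|]. apply jn_mono. apply le_jn_l. apply le_refl.
          eapply le_trans; [apply l2|]. apply jn_mono. apply le_jn_r. apply le_refl.
        - intros x hx. exists x. split; auto. apply le_jn_l. }
      apply NNPP; intro hne.
      assert (P N). { split. apply hN. split. apply hN. intros x [m [hm hl]] hF. apply hne. exists m, x. auto. }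
      apply hna. apply (Mmax N H).
      + intros x hx. exists x; split; auto. apply le_jn_l.
      + exists (zero L). split; auto. apply le_jn_r. }
    unshelve eexists (exist _ M _).
    + split; auto. split; auto. split; auto. split.
      * intro h. apply (MF (one L)); auto.
      * intros a b hab. destruct (classic (M a)) as [|ha]; auto. destruct (classic (M b)) as [|hb]; auto.
        exfalso. destruct (ext a ha) as [m1 [f1 [hm1 [hf1 l1]]]]. destruct (ext b hb) as [m2 [f2 [hm2 [hf2 l2]]]].
        apply (MF (mt L f1 f2)).
        -- apply Md with (jn L (jn L m1 m2) (mt L a b)). apply Mj; auto.
           eapply le_trans. apply mt_mono; eauto. apply key_dist.
        -- apply Fm; auto.
    + simpl. split; auto. }
Qed.


Definition pI {L : pmAlg} (u : Point L) : L -> Prop := proj1_sig u.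

Lemma p0 {L : pmAlg} (u : Point L) : pI u (zero L).
Proof. unfold pI; destruct u as [I0 HI]; simpl; destruct HI as [h _]; exact h. Qed.
Lemma pdown {L : pmAlg} (u : Point L) a b : pI u b -> le L a b -> pI u a.
Proof. unfold pI; destruct u as [I0 HI]; simpl; destruct HI as [_ [h _]]; apply h. Qed.
Lemma pjn {L : pmAlg} (u : Point L) a b : pI u a -> pI u b -> pI u (jn L a b).
Proof. unfold pI; destruct u as [I0 HI]; simpl; destruct HI as [_ [_ [h _]]]; apply h. Qed.
Lemma pn1 {L : pmAlg} (u : Point L) : ~ pI u (one L).
Proof. unfold pI; destruct u as [I0 HI]; simpl; destruct HI as [_ [_ [_ [h _]]]]; apply h. Qed.
Lemma pprime {L : pmAlg} (u : Point L) a b : pI u (mt L a b) -> pI u a \/ pI u b.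
Proof. unfold pI; destruct u as [I0 HI]; simpl; destruct HI as [_ [_ [_ [_ h]]]]; apply h. Qed.
Lemma pmt {L : pmAlg} (u : Point L) a b : pI u a -> pI u (mt L a b).
Proof. intro h. apply pdown with a; auto. apply le_mt_l. Qed.
Lemma pnmt {L : pmAlg} (u : Point L) a b : ~ pI u a -> ~ pI u b -> ~ pI u (mt L a b).
Proof. intros h1 h2 h. destruct (pprime u a b h); auto. Qed.
Lemma pjn_one {L : pmAlg} (u : Point L) a b : jn L a b = one L -> pI u a -> pI u b -> False.
Proof. intros e h1 h2. apply (pn1 u). rewrite <- e. apply pjn; auto. Qed.

Lemma zeta_prime {L : pmAlg} (u : Point L) : prime_ideal L (fun a => ~ pI u (dm L a)).
Proof.
  split; [|split; [|split; [|split]]].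
  - rewrite dm0. apply pn1.
  - intros a b hb hab ha. apply hb. apply pdown with (dm L a); auto. apply dm_anti; auto.
  - intros a b ha hb. rewrite dmJ. apply pnmt; auto.
  - rewrite dm1. intro h; apply h, p0.
  - intros a b h. rewrite dmM in h. destruct (classic (pI u (dm L a))) as [ha|ha]; auto.
    destruct (classic (pI u (dm L b))) as [hb|hb]; auto. exfalso. apply h, pjn; auto.
Qed.

Definition zeta {L : pmAlg} (u : Point L) : Point L := exist _ _ (zeta_prime u).
Lemma zetaE {L : pmAlg} (u : Point L) a : pI (zeta u) a <-> ~ pI u (dm L a).
Proof. reflexivity. Qed.

Definition Rr {L : pmAlg} (u w : Point L) := pt_le L (zeta w) u.
Fixpoint Rk {L : pmAlg} (k : nat) (u w : Point L) : Prop :=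
  match k with 0 => pt_le L u w /\ pt_le L w u | S k => exists v, Rk k u v /\ Rr v w end.

Lemma zz_le {L : pmAlg} (u : Point L) : pt_le L (zeta (zeta u)) u.
Proof. intros a h. unfold pI in *. simpl in h. rewrite dmK in h. apply NNPP; auto. Qed.
Lemma zz_ge {L : pmAlg} (u : Point L) : pt_le L u (zeta (zeta u)).
Proof. intros a h. simpl. rewrite dmK. auto. Qed.
Lemma zeta_anti {L : pmAlg} (u v : Point L) : pt_le L u v -> pt_le L (zeta v) (zeta u).
Proof. intros h a ha. simpl in *. intro hu. apply ha, h, hu. Qed.
Lemma Rr_swap {L : pmAlg} (v w : Point L) : pt_le L (zeta w) v -> pt_le L (zeta v) w.
Proof. intros h a ha. simpl in ha. apply NNPP; intro hw. apply ha, h. simpl. rewrite dmK. auto. Qed.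

Lemma chi_char {L : pmAlg} (v : Point L) (a : L) :
  ~ pI v (chi L a) <-> forall w, Rr v w -> ~ pI w a.
Proof.
  split.
  - intros hv w hR hw. pose proof (p0 (zeta w)) as h0. rewrite <- (mt_st L (dm L a)) in h0.
    destruct (pprime _ _ _ h0) as [h|h].
    + apply h. rewrite dmK. auto.
    + apply hv, hR, h.
  - intros H hv.
    set (F := fun b => exists c, ~ pI v c /\ le L (mt L c (dm L a)) b).
    destruct (PIT L (fun x => x = zero L) F) as [J [_ HJ]].
    + split; [reflexivity|split].
      * intros x y -> h. apply le_zero; auto.
      * intros x y -> ->. apply jn_idem.
    + split; [|split].
      * exists (one L). split. apply pn1. apply le1.
      * intros x y [c [hc hl]] h. exists c; split; auto. eapply le_trans; eauto.
      * intros x y [c1 [h1 l1]] [c2 [h2 l2]]. exists (mt L c1 c2). split. apply pnmt; auto.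
        apply mt_glb. eapply le_trans; [|apply l1]. apply mt_mono. apply le_mt_l. apply le_refl.
        eapply le_trans; [|apply l2]. apply mt_mono. apply le_mt_r. apply le_refl.
    + intros x -> [c [hc hl]]. apply hc. apply pdown with (chi L a); auto.
      apply le_st. rewrite mtC. apply le_zero; auto.
    + apply (H (zeta J)).
      * intros x hx. apply zz_le in hx. apply NNPP; intro hn. apply (HJ x hx). exists x. split; auto. apply le_mt_l.
      * simpl. intro hJ. apply (HJ _ hJ). exists (one L). split. apply pn1. rewrite mtC, mt1. apply le_refl.
Qed.

Lemma chik_char {L : pmAlg} k (u : Point L) (a : L) :
  ~ pI u (Nat.iter k (chi L) a) <-> forall w, Rk k u w -> ~ pI w a.
Proof.
  revert u a; induction k; intros u a.
  - simpl. split. intros h w [h1 h2] hw. apply h, h2, hw. intros h hu. apply (h u); auto. split; intros x; auto.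
  - rewrite iter_swap, IHk. simpl. split.
    + intros h w [v [hv hR]]. apply chi_char with v; auto.
    + intros h v hv. apply chi_char. intros w hR. apply h. eauto.
Qed.


Definition Hd {L : pmAlg} (p : Point L) k (a : L) := exists b, ~ pI p (dm L b) /\ le L a (Nat.iter k (chi L) b).

Lemma Hd_ideal {L : pmAlg} (p : Point L) k : ideal L (Hd p k).
Proof.
  split; [|split].
  - exists (zero L). split. rewrite dm0. apply pn1. apply le0.
  - intros x y [b [hb hl]] h. exists b; split; auto. eapply le_trans; eauto.
  - intros x y [b1 [h1 l1]] [b2 [h2 l2]]. exists (jn L b1 b2). split.
    + rewrite dmJ. apply pnmt; auto.
    + apply jn_lub. eapply le_trans; [apply l1|]. apply chik_mono, le_jn_l.
      eapply le_trans; [apply l2|]. apply chik_mono, le_jn_r.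
Qed.

Definition Gen {L : pmAlg} (p : Point L) k (v : Point L) (x : L) :=
  exists h c, Hd p k h /\ pI v c /\ le L x (jn L h c).

Lemma Gen_ideal {L : pmAlg} (p : Point L) k v : ideal L (Gen p k v).
Proof.
  destruct (Hd_ideal p k) as [H0 [Hdn Hj]].
  split; [|split].
  - exists (zero L), (zero L). split; auto. split. apply p0. apply le0.
  - intros x y [h [c [h1 [h2 h3]]]] l. exists h, c. split; auto. split; auto. eapply le_trans; eauto.
  - intros x y [h1 [c1 [a1 [b1 l1]]]] [h2 [c2 [a2 [b2 l2]]]]. exists (jn L h1 h2), (jn L c1 c2).
    split; auto. split. apply pjn; auto.
    apply jn_lub.
    + eapply le_trans; [apply l1|]. apply jn_mono; apply le_jn_l.
    + eapply le_trans; [apply l2|]. apply jn_mono; apply le_jn_r.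
Qed.

Lemma filt_one (L : pmAlg) : filt L (fun x => x = one L).
Proof. split; [reflexivity|split]. intros x y -> h. apply le_one; auto. intros x y -> ->. apply mt_idem. Qed.

Lemma Gen_one {L : pmAlg} (p : Point L) k v : Gen p k v (one L) -> exists h c, Hd p k h /\ pI v c /\ jn L h c = one L.
Proof. intros [h [c [a [b l]]]]. exists h, c. split; auto. split; auto. apply le_one; auto. Qed.

Lemma Rk_desc {L : pmAlg} (p : Point L) k w : Rk (S k) p w <-> forall a, Hd p k a -> pI w a.
Proof.
  revert w; induction k; intro w.
  - split.
    + intros [v [[h1 h2] hR]] a [b [hb hl]]. apply pdown with b; auto.
      apply NNPP; intro hw. apply hb. apply h2, hR. simpl. rewrite dmK. auto.
    + intros H. exists p. split. split; intros x; auto. intros a ha. simpl in ha.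
      apply NNPP; intro hp. apply ha, H. exists (dm L a). split. rewrite dmK; auto. apply le_refl.
  - split.
    + intros [v [hv hR]] a [b [hb hl]]. pose proof (proj1 (IHk v) hv) as hv0. clear hv. rename hv0 into hv.
      assert (hj : pI v (Nat.iter k (chi L) b)). { apply hv. exists b. split; auto. apply le_refl. }
      apply pdown with (chi L (Nat.iter k (chi L) b)); auto.
      apply NNPP; intro hw. apply (pjn_one v _ _ (jn_chi L (Nat.iter k (chi L) b))); auto.
      apply hR. simpl. rewrite dmK. auto.
    + intros H. destruct (PIT L (Gen p k (zeta w)) (fun x => x = one L) (Gen_ideal p k (zeta w)) (filt_one L))
        as [J [HJ1 _]].
      * intros x hx ->. apply Gen_one in hx. destruct hx as [h [c [[b [hb hl]] [hc e]]]].
        apply hc. apply pdown with (chi L h). 2: apply jn_one_dm; auto.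
        apply H. exists b. split; auto. apply chi_mono in hl. exact hl.
      * exists J. split.
        -- apply (proj2 (IHk J)). intros a ha. apply HJ1. exists a, (zero L). split; auto. split. apply p0. apply le_jn_l.
        -- intros c hc. apply HJ1. exists (zero L), c. split. apply (Hd_ideal p k). split; auto. apply le_jn_r.
Qed.


Lemma DS {L : pmAlg} (p : Point L) k (v : Point L) :
  (forall w, Rk (S k) p w -> ~ pt_le L v w) -> exists c, pI v c /\ forall w, Rk (S k) p w -> ~ pI w c.
Proof.
  intro H. destruct (classic (Gen p k v (one L))) as [hg|hg].
  - apply Gen_one in hg. destruct hg as [h [c [hh [hc e]]]]. exists c. split; auto.
    intros w hw hwc. pose proof (proj1 (Rk_desc p k w) hw) as hw'. apply (pjn_one w h c e); auto.
  - exfalso. destruct (PIT L (Gen p k v) (fun x => x = one L) (Gen_ideal p k v) (filt_one L)) as [J [HJ _]].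
    + intros x hx ->. auto.
    + apply (H J).
      * apply Rk_desc. intros a ha. apply HJ. exists a, (zero L). split; auto. split. apply p0. apply le_jn_l.
      * intros c hc. apply HJ. exists (zero L), c. split. apply (Hd_ideal p k). split; auto. apply le_jn_r.
Qed.

Lemma stab_base {L : pmAlg} n (HL : in_Mn n L) (p v : Point L) :
  Rk (S (S (S n))) p v -> exists w, (Rk (S n) p w \/ Rk (S (S n)) p w) /\ pt_le L v w.
Proof.
  intro hv. apply NNPP; intro hn.
  destruct (DS p n v) as [c1 [h1 H1]]. { intros w hw hl. apply hn. eauto. }
  destruct (DS p (S n) v) as [c2 [h2 H2]]. { intros w hw hl. apply hn. eauto. }
  set (x := jn L c1 c2).
  assert (hx : pI v x) by (apply pjn; auto).
  assert (X1 : forall w, Rk (S n) p w -> ~ pI w x).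
  { intros w hw h. apply (H1 w hw). apply pdown with x; auto. apply le_jn_l. }
  assert (X2 : forall w, Rk (S (S n)) p w -> ~ pI w x).
  { intros w hw h. apply (H2 w hw). apply pdown with x; auto. apply le_jn_r. }
  set (y := mt L x (chi L x)).
  assert (E : Nat.iter (S n) (chi L) y = Nat.iter (S (S n)) (chi L) y).
  { destruct HL as [_ HL]. pose proof (HL x) as e. unfold iter_dmst in e. change (Nat.iter (S (S n)) (chi L) y) with (chi L (Nat.iter (S n) (chi L) y)).
    change (Nat.iter (S n) (chi L) y) with (chi L (Nat.iter n (chi L) y)). f_equal. exact e. }
  assert (hp : ~ pI p (Nat.iter (S n) (chi L) y)).
  { apply chik_char. intros w hw hy. destruct (pprime w _ _ hy) as [h|h].
    - apply (X1 w hw h).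
    - revert h. apply chi_char. intros w' hR. apply X2. exists w; auto. }
  rewrite E in hp. destruct hv as [w [hw hR]].
  assert (hwy : ~ pI w y) by (apply (proj1 (chik_char _ _ _) hp); auto).
  assert (hwc : ~ pI w (chi L x)). { intro h. apply hwy. apply pdown with (chi L x); auto. apply le_mt_r. }
  apply (proj1 (chi_char w x) hwc v hR hx).
Qed.


Lemma Rk_plus2 {L : pmAlg} j (p v : Point L) : Rk j p v -> Rk (S (S j)) p v.
Proof. intro h. exists (zeta v). split. exists v. split; auto. apply zz_le. intros a; auto. Qed.

Lemma Rk_plus2i {L : pmAlg} i j (p v : Point L) : Rk j p v -> Rk (j + 2 * i) p v.
Proof. induction i; intro h. replace (j + 2 * 0) with j by lia. auto.
  replace (j + 2 * S i) with (S (S (j + 2 * i))) by lia. apply Rk_plus2; auto. Qed.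

Lemma stab {L : pmAlg} n (HL : in_Mn n L) (p : Point L) m : S n <= m -> forall v,
  Rk (S (S m)) p v -> exists w, (Rk m p w \/ Rk (S m) p w) /\ pt_le L v w.
Proof.
  induction 1 as [|m Hm IH].
  - apply stab_base; auto.
  - intros v [x [hx hR]]. destruct (IH x hx) as [w [hw hl]]. exists v. split; [|intros a; auto].
    assert (Rr w v) by (intros a ha; apply hl, hR, ha).
    destruct hw; [left|right]; exists w; auto.
Qed.

Lemma stab2 {L : pmAlg} n (HL : in_Mn n L) (p : Point L) m : S n <= m -> forall v,
  Rk (S (S (S m))) p v -> Rk (S m) p v \/ Rk (S (S m)) p v.
Proof.
  intros Hm v [x [hx hR]]. destruct (stab n HL p m Hm x hx) as [w [hw hl]].
  assert (Rr w v) by (intros a ha; apply hl, hR, ha).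
  destruct hw; [left|right]; exists w; auto.
Qed.

Lemma boundT {L : pmAlg} n (HL : in_Mn n L) (p : Point L) j v :
  Rk j p v -> Rk (S (S n)) p v \/ Rk (S (S (S n))) p v.
Proof.
  assert (Hge : forall j, S (S n) <= j -> forall v, Rk j p v -> Rk (S (S n)) p v \/ Rk (S (S (S n))) p v).
  { intro j0. induction j0 as [j0 IH] using (well_founded_induction lt_wf). intros hj v0 hv.
    destruct (Nat.eq_dec j0 (S (S n))) as [->|h1]; auto.
    destruct (Nat.eq_dec j0 (S (S (S n)))) as [->|h2]; auto.
    destruct j0 as [|[|[|m]]]; try lia.
    assert (hm : S n <= m) by lia.
    destruct (stab2 n HL p m hm v0 hv) as [h|h]; [apply (IH (S m)) | apply (IH (S (S m)))]; auto; lia. }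
  intro hv. apply (Hge (j + 2 * S (S n))). lia. apply Rk_plus2i; auto.
Qed.


Lemma pc_sym {L : pmAlg} (x y : Point L) : path_connected L x y -> path_connected L y x.
Proof. induction 1. apply rt_step. destruct H; [right|left]; auto. apply rt_refl. eapply rt_trans; eauto. Qed.
Lemma pc_step {L : pmAlg} (x y z : Point L) : path_connected L x y -> comparable L y z -> path_connected L x z.
Proof. intros. eapply rt_trans; eauto. apply rt_step; auto. Qed.
Lemma pc_trans {L : pmAlg} (x y z : Point L) : path_connected L x y -> path_connected L y z -> path_connected L x z.
Proof. intros. eapply rt_trans; eauto. Qed.
Lemma zeta_pc {L : pmAlg} (x y : Point L) : path_connected L x y -> path_connected L (zeta x) (zeta y).
Proof. induction 1. apply rt_step. destruct H; [right|left]; apply zeta_anti; auto. apply rt_refl. eapply rt_trans; eauto. Qed.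

Lemma K_of_Rk {L : pmAlg} (p : Point L) j v : Rk j p v -> path_connected L p v \/ path_connected L p (zeta v).
Proof.
  revert v; induction j; intros v hv.
  - left. apply rt_step. left. apply hv.
  - destruct hv as [x [hx hR]]. destruct (IHj x hx) as [h|h].
    + right. apply pc_step with x; auto. right. auto.
    + left. apply pc_step with (zeta x); auto. left. apply Rr_swap; auto.
Qed.

Lemma parity {L : pmAlg} (p : Point L) k :
  (forall v, Rk (2 * k) p v -> path_connected L p v) /\ (forall v, Rk (S (2 * k)) p v -> path_connected L p (zeta v)).
Proof.
  induction k as [|k [IH1 IH2]].
  - assert (A0 : forall v, Rk 0 p v -> path_connected L p v). { intros v hv. apply rt_step. left. apply hv. }
    split. exact A0. intros v [x [hx hR]]. apply pc_step with x; auto. right; auto.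
  - assert (A1 : forall v, Rk (2 * S k) p v -> path_connected L p v).
    { replace (2 * S k) with (S (S (2 * k))) by lia. intros v [x [hx hR]].
      apply pc_step with (zeta x); auto. left. apply Rr_swap; auto. }
    split. exact A1. intros v [x [hx hR]]. apply pc_step with x; auto. right; auto.
Qed.

Lemma F1 {L : pmAlg} (p q : Point L) : path_connected L p q -> exists k, Rk (2 * k) p q.
Proof.
  intro h. apply clos_rt_rtn1_iff in h. induction h as [|y z hyz h IH].
  - exists 0. simpl. split; intros a; auto.
  - destruct IH as [k hk]. exists (S k). replace (2 * S k) with (S (S (2 * k))) by lia.
    assert (exists J, pt_le L J y /\ pt_le L J z) as [J [h1 h2]].
    { destruct hyz; [exists y|exists z]; split; auto; intros a; auto. }
    exists (zeta J). split.
    + exists y. split; auto. intros a ha. apply h1, zz_le, ha.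
    + apply zeta_anti; auto.
Qed.

Lemma Rk_desc' {L : pmAlg} (p : Point L) k w : ~ Rk (S k) p w -> exists y, Hd p k y /\ ~ pI w y.
Proof. intro h. apply NNPP; intro hn. apply h. apply Rk_desc. intros a ha. apply NNPP; intro hw. apply hn; eauto. Qed.

Theorem theorem4p1 (n : nat) (L : pmAlg) (HL : in_Mn n L)
  (C : Point L -> Prop) (HC : order_component L C) :
  is_closed L C.
Proof.
  destruct HC as [Hc Hmax]. unfold is_closed, is_open. intros q hq.
  destruct (classic (exists p, C p)) as [[p hp]|hne].
  2:{ exists nil. split. constructor. intros q' _ h. apply hne; eauto. }
  set (K := path_connected L p).
  assert (CK : forall u, C u <-> K u).
  { intro u. split. intro h; apply Hc; auto.
    apply Hmax. intros x hx; apply Hc; auto.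
    intros x y hx hy. apply pc_trans with p; auto. apply pc_sym; auto. }
  assert (hKq : ~ K q) by (intro h; apply hq, CK, h).
  destruct (classic (exists w, K w /\ K (zeta w))) as [[w [hw hzw]]|hB].
  -
    assert (kz : forall x, K x -> K (zeta x)).
    { intros x hx. apply pc_trans with (zeta w); auto. apply zeta_pc. apply pc_trans with p; auto. apply pc_sym; auto. }
    assert (KA : forall j v, Rk j p v -> K v).
    { intros j v hv. destruct (K_of_Rk p j v hv) as [h|h]; auto.
      apply kz in h. apply pc_step with (zeta (zeta v)); auto. left. apply zz_le. }
    destruct (Rk_desc' p (S n) q) as [y1 [hy1 nq1]]. { intro h. apply hKq. eapply KA; eauto. }
    destruct (Rk_desc' p (S (S n)) q) as [y2 [hy2 nq2]]. { intro h. apply hKq. eapply KA; eauto. }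
    exists ((y1, true) :: (y2, true) :: nil). split.
    + repeat constructor; auto.
    + intros u hu hCu. inversion hu as [|? ? hu1 hu2]; subst. inversion hu2 as [|? ? hu3 _]; subst.
      apply CK in hCu. destruct (F1 p u hCu) as [k hk].
      destruct (boundT n HL p _ u hk) as [h|h].
      * apply hu1. apply (proj1 (Rk_desc p (S n) u) h); auto.
      * apply hu3. apply (proj1 (Rk_desc p (S (S n)) u) h); auto.
  -
    set (E := 2 * S n).
    assert (RE2 : forall v, Rk (S (S E)) p v -> Rk E p v).
    { intros v [x [hx hR]].
      assert (hm : S n <= S (2 * n)) by lia.
      assert (hx' : Rk (S (S (S (2 * n)))) p x) by (replace (S (S (S (2 * n)))) with (S E) by (unfold E; lia); exact hx).
      destruct (stab n HL p (S (2 * n)) hm x hx') as [w [hw hl]].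
      destruct hw as [hw|hw].
      + replace E with (S (S (2 * n))) by (unfold E; lia). exists w. split; auto. intros a ha. apply hl, hR, ha.
      + exfalso. apply hB. exists x. split.
        * apply pc_step with w. apply (proj1 (parity p (S n))). replace (2 * S n) with (S (S (2 * n))) by lia. exact hw.
          right; auto.
        * apply (proj2 (parity p (S n))). exact hx. }
    assert (REi : forall i v, Rk (E + 2 * i) p v -> Rk E p v).
    { induction i; intros v hv.
      - replace (E + 2 * 0) with E in hv by lia. auto.
      - replace (E + 2 * S i) with (S (S (E + 2 * i))) in hv by lia.
        destruct hv as [x [[y [hy hR1]] hR2]]. apply RE2. exists x. split; auto. exists y. split; auto. }
    assert (KE : forall u, K u -> Rk E p u).
    { intros u hu. destruct (F1 p u hu) as [k hk]. destruct (le_lt_dec k (S n)) as [h|h].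
      - replace E with (2 * k + 2 * (S n - k)) by (unfold E; lia). apply Rk_plus2i; auto.
      - apply (REi (k - S n)). replace (E + 2 * (k - S n)) with (2 * k) by (unfold E; lia). auto. }
    destruct (Rk_desc' p (S (2 * n)) q) as [y [hy nq]].
    { intro h. apply hKq. apply (proj1 (parity p (S n))). replace (2 * S n) with (S (S (2 * n))) by lia. exact h. }
    exists ((y, true) :: nil). split.
    + repeat constructor; auto.
    + intros u hu hCu. inversion hu as [|? ? hu1 _]; subst.
      apply CK in hCu. apply KE in hCu. unfold E in hCu. replace (2 * S n) with (S (S (2 * n))) in hCu by lia.
      apply hu1. apply (proj1 (Rk_desc p (S (2 * n)) u) hCu); auto.
Qed.
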